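(* Let $\{\psi_i\}_{i=1}^N$ be a frame for $\mathbb{R}^d$ with analysis operator $\Psi$ and frame operator $S=\Psi^\top\Psi$, and let $\{\varphi_i\}_{i=1}^N$ be its canonical dual frame, $\varphi_i=S^{-1}\psi_i$. Then the set $\{(\varphi_i,\psi_i)\}_{i=1}^N$ is cyclically monotone.
   Context: A finite frame is a finite spanning set of $\mathbb{R}^d$; its analysis operator $\Psi\in\mathbb{R}^{N\times d}$ has rows $\psi_i^\top$. A set $S\subset\mathbb{R}^d\times\mathbb{R}^d$ is cyclically monotone if for every finite subset $\{(x_1,y_1),\dots,(x_n,y_n)\}\subset S$ and every permutation $\sigma$ of $\{1,\dots,n\}$, $\sum_i\langle x_i,y_i\rangle\ge\sum_i\langle x_i,y_{\sigma(i)}\rangle$. *)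

(* Defs.v *)
From mathcomp Require Import all_boot all_order all_algebra all_fingroup.
Set Implicit Arguments. Unset Strict Implicit. Unset Printing Implicit Defensive.
Import Order.TTheory GRing.Theory Num.Theory.
Local Open Scope ring_scope.

Definition inner (R : realFieldType) (d : nat) (x y : 'cV[R]_d) : R :=
  \sum_(k < d) x k 0 * y k 0.

Definition cyclically_monotone (R : realFieldType) (d : nat)
  (S : 'cV[R]_d * 'cV[R]_d -> Prop) : Prop :=
  forall (n : nat) (x y : 'I_n -> 'cV[R]_d),
    injective (fun i => (x i, y i)) ->
    (forall i, S (x i, y i)) ->
    forall s : 'S_n,
      \sum_(i < n) inner (x i) (y (s i)) <= \sum_(i < n) inner (x i) (y i).

Definition frame_vec (R : realFieldType) (N d : nat) (Psi : 'M[R]_(N, d))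
  (i : 'I_N) : 'cV[R]_d := (row i Psi)^T.

Definition frame_op (R : realFieldType) (N d : nat) (Psi : 'M[R]_(N, d))
  : 'M[R]_d := Psi^T *m Psi.

Definition canon_dual (R : realFieldType) (N d : nat) (Psi : 'M[R]_(N, d))
  (i : 'I_N) : 'cV[R]_d := invmx (frame_op Psi) *m frame_vec Psi i.

(* {psi_i} is a frame (finite spanning set of R^d): the rows of Psi span R^d. *)
Definition is_frame (R : realFieldType) (N d : nat) (Psi : 'M[R]_(N, d)) : Prop :=
  row_full Psi.

(* Main.v *)
Require Import Defs.
From mathcomp Require Import all_boot all_order all_algebra all_fingroup.
From mathcomp Require Import reals.
From mathcomp Require Import lra.
Import Order.TTheory GRing.Theory Num.Theory.
Local Open Scope ring_scope.

Lemma innerE (R : realFieldType) d (x y : 'cV[R]_d) :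
  inner x y = (x^T *m y) 0 0.
Proof. by rewrite /inner mxE; apply: eq_bigr => k _; rewrite mxE. Qed.

Lemma inner2 (R : realFieldType) d (a b : 'cV[R]_d) :
  2 * inner a b <= inner a a + inner b b.
Proof.
rewrite /inner mulr_sumr -big_split /=; apply: ler_sum => k _.
have := sqr_ge0 (a k 0 - b k 0); nra.
Qed.

Lemma inner_perm (R : realFieldType) m n (w : 'I_n -> 'cV[R]_m) (s : 'S_n) :
  \sum_(i < n) inner (w i) (w (s i)) <= \sum_(i < n) inner (w i) (w i).
Proof.
have H : 2 * \sum_(i < n) inner (w i) (w (s i)) <=
   \sum_(i < n) inner (w i) (w i) + \sum_(i < n) inner (w (s i)) (w (s i)).
  by rewrite mulr_sumr -big_split /=; apply: ler_sum => i _; apply: inner2.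
have E : \sum_(i < n) inner (w (s i)) (w (s i)) = \sum_(i < n) inner (w i) (w i).
  by rewrite [RHS](reindex_inj (@perm_inj _ s)).
rewrite E in H; lra.
Qed.

Theorem mainTheorem6 (R : realType) (N d : nat) (Psi : 'M[R]_(N, d)) :
  is_frame Psi ->
  cyclically_monotone
    (fun p : 'cV[R]_d * 'cV[R]_d =>
       exists i : 'I_N, p = (canon_dual Psi i, frame_vec Psi i)).
Proof.
move=> _ n x y _ HS s.
set B := invmx (frame_op Psi).
have hx : forall i, x i = B *m y i.
  by move=> i; case: (HS i) => j [-> ->].
have [C HC] : exists C : 'M[R]_(N, d), forall u v : 'cV[R]_d,
    inner (B *m u) v = inner (C *m u) (C *m v).
  have St : (frame_op Psi)^T = frame_op Psi.
    by rewrite /frame_op trmx_mul trmxK.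
  case: (boolP (frame_op Psi \in unitmx)) => hU.
  - exists (Psi *m B) => u v; rewrite !innerE.
    have Bt : B^T = B by rewrite /B trmx_inv St.
    congr (_ 0 0).
    rewrite !trmx_mul Bt -!mulmxA; congr (_ *m _).
    rewrite !mulmxA -[B *m Psi^T *m Psi](mulmxA B) -/(frame_op Psi).
    by rewrite /B mulVmx // mul1mx.
  - exists Psi => u v; rewrite !innerE.
    have -> : B = frame_op Psi by rewrite /B invmx_out.
    by rewrite !trmx_mul trmxK !mulmxA.
have -> : \sum_(i < n) inner (x i) (y (s i)) =
          \sum_(i < n) inner (C *m y i) (C *m y (s i)).
  by apply: eq_bigr => i _; rewrite hx HC.
have -> : \sum_(i < n) inner (x i) (y i) =
          \sum_(i < n) inner (C *m y i) (C *m y i).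
  by apply: eq_bigr => i _; rewrite hx HC.
exact: (@inner_perm _ _ _ (fun i => C *m y i) s).
Qed.
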